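(* Let $m,n\ge 0$ with $m+n\ge 1$. The Heisenberg Lie superalgebra $H(m,n)$ is capable if and only if $m=1$ and $n=0$.
   Context: All algebras are over a field $\mathbb{F}$ of characteristic $\neq 2,3$. $H(m,n)$ is the Lie superalgebra with even basis $x_1,\dots,x_{2m},z$, odd basis $y_1,\dots,y_n$, and nonzero brackets $[x_i,x_{m+i}]=z$ ($1\le i\le m$), $[y_j,y_j]=z$ ($1\le j\le n$). A Lie superalgebra $L$ is capable if $L\cong H/Z(H)$ for some Lie superalgebra $H$, where $Z(H)$ denotes the center. *)

(* Defs.v *)
From HB Require Import structures.
From mathcomp Require Import all_boot all_order all_algebra.
Set Implicit Arguments. Unset Strict Implicit. Unset Printing Implicit Defensive.
Import GRing.Theory.
Local Open Scope ring_scope.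

(* A "super bracket" over F: an even part ev, an odd part od (vector spaces over F),
   and the three homogeneous components of the bracket
     [x0,y0] = b00 x0 y0 (even), [x0,y1] = b01 x0 y1 (odd), [x1,y1] = b11 x1 y1 (even);
   [x1,y0] is defined as -[y0,x1] = - b01 y0 x1 (super skew-symmetry built in). *)
Record SuperBracket (F : fieldType) := {
  ev : lmodType F;
  od : lmodType F;
  b00 : ev -> ev -> ev;
  b01 : ev -> od -> od;
  b11 : od -> od -> ev }.

Arguments b00 {F} s _ _.
Arguments b01 {F} s _ _.
Arguments b11 {F} s _ _.

Section SB.
Variables (F : fieldType) (L : SuperBracket F).

Definition elt := (ev L * od L)%type.
Definition padd (u v : elt) : elt := (u.1 + v.1, u.2 + v.2).
Definition psub (u v : elt) : elt := (u.1 - v.1, u.2 - v.2).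

Definition pbr (u v : elt) : elt :=
  (b00 L u.1 v.1 + b11 L u.2 v.2, b01 L u.1 v.2 - b01 L v.1 u.2).

Definition homog (p : bool) (x0 : ev L) (x1 : od L) : elt :=
  if p then (0, x1) else (x0, 0).

Definition is_lsalg : Prop :=
  (forall a x y z, b00 L (a *: x + y) z = a *: b00 L x z + b00 L y z) /\
  (forall a x y z, b00 L z (a *: x + y) = a *: b00 L z x + b00 L z y) /\
  (forall a x y z, b01 L (a *: x + y) z = a *: b01 L x z + b01 L y z) /\
  (forall a x y z, b01 L z (a *: x + y) = a *: b01 L z x + b01 L z y) /\
  (forall a x y z, b11 L (a *: x + y) z = a *: b11 L x z + b11 L y z) /\
  (forall a x y z, b11 L z (a *: x + y) = a *: b11 L z x + b11 L z y) /\
  (forall x y, b00 L x y = - b00 L y x) /\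
  (forall x y, b11 L x y = b11 L y x) /\
  (* super Jacobi identity on homogeneous elements:
     [x,[y,z]] = [[x,y],z] + (-1)^{|x||y|} [y,[x,z]] *)
  (forall (p q r : bool) x0 x1 y0 y1 z0 z1,
     let x := homog p x0 x1 in let y := homog q y0 y1 in let z := homog r z0 z1 in
     pbr x (pbr y z) =
       (if p && q then psub else padd) (pbr (pbr x y) z) (pbr y (pbr x z))).

Definition center (u : elt) : Prop := forall v, pbr u v = (0, 0).
End SB.

Definition is_hom (F : fieldType) (H L : SuperBracket F)
  (f0 : ev H -> ev L) (f1 : od H -> od L) : Prop :=
  (forall a x y, f0 (a *: x + y) = a *: f0 x + f0 y) /\
  (forall a x y, f1 (a *: x + y) = a *: f1 x + f1 y) /\
  (forall x y, f0 (b00 H x y) = b00 L (f0 x) (f0 y)) /\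
  (forall x y, f1 (b01 H x y) = b01 L (f0 x) (f1 y)) /\
  (forall x y, f0 (b11 H x y) = b11 L (f1 x) (f1 y)).

(* L is capable iff L ≅ H / Z(H) for some Lie superalgebra H, i.e. (first isomorphism
   theorem) there is a surjective homomorphism H -> L whose kernel is exactly Z(H). *)
Definition capable (F : fieldType) (L : SuperBracket F) : Prop :=
  exists (H : SuperBracket F) (f0 : ev H -> ev L) (f1 : od H -> od L),
    is_lsalg H /\ is_hom f0 f1 /\
    (forall y, exists x, f0 x = y) /\ (forall y, exists x, f1 x = y) /\
    (forall u : elt H, (f0 u.1 = 0 /\ f1 u.2 = 0) <-> center u).

(* Heisenberg Lie superalgebra H(m,n):
   even part = F^m * F^m * F, with x_i = (e_i,0,0), x_{m+i} = (0,e_i,0), z = (0,0,1);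
   odd part = F^n with y_j = e_j.
   [(a,b,c),(a',b',c')] = (0,0, a.b' - a'.b),  [y,y'] = (0,0, y.y'),  [even, odd] = 0. *)
Definition dotv (F : fieldType) (k : nat) (u v : 'rV[F]_k) : F :=
  \sum_(i < k) u ord0 i * v ord0 i.

Definition HeisEv (F : fieldType) (m : nat) : lmodType F :=
  ('rV[F]_m * 'rV[F]_m * F^o)%type.

Definition Heis (F : fieldType) (m n : nat) : SuperBracket F :=
  {| ev := HeisEv F m;
     od := 'rV[F]_n;
     b00 := fun (u v : HeisEv F m) =>
              ((0 : 'rV[F]_m), (0 : 'rV[F]_m),
               (dotv u.1.1 v.1.2 - dotv v.1.1 u.1.2 : F^o));
     b01 := fun _ _ => 0;
     b11 := fun (y y' : 'rV[F]_n) =>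
              ((0 : 'rV[F]_m), (0 : 'rV[F]_m), (dotv y y' : F^o)) |}.

(* Main.v *)
Require Import Defs.
From mathcomp Require Import all_boot all_order all_algebra.
From mathcomp Require Import ring.
Set Implicit Arguments. Unset Strict Implicit.
Import GRing.Theory.
Local Open Scope ring_scope.

Definition islin (F : fieldType) (U V : lmodType F) (f : U -> V) :=
  forall a x y, f (a *: x + y) = a *: f x + f y.

Lemma lin0 (F : fieldType) (U V : lmodType F) (f : U -> V) : islin f -> f 0 = 0.
Proof. move=> h; have := h 1 0 0; rewrite scaler0 scale1r addr0 => e.
by apply: (addrI (f 0)); rewrite addr0 -e. Qed.
Lemma linZ (F : fieldType) (U V : lmodType F) (f : U -> V) : islin f -> forall a x, f (a *: x) = a *: f x.
Proof. by move=> h a x; rewrite -[a *: x]addr0 h lin0 // addr0. Qed.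
Lemma linN (F : fieldType) (U V : lmodType F) (f : U -> V) : islin f -> forall x, f (- x) = - f x.
Proof. by move=> h x; rewrite -scaleN1r linZ // scaleN1r. Qed.
Lemma linD (F : fieldType) (U V : lmodType F) (f : U -> V) : islin f -> forall x y, f (x + y) = f x + f y.
Proof. by move=> h x y; have := h 1 x y; rewrite !scale1r. Qed.

Lemma pair_eq (A B : Type) (u v : A * B) : u.1 = v.1 -> u.2 = v.2 -> u = v.
Proof. by case: u; case: v => /= ? ? ? ? -> ->. Qed.

Definition E5 (F : fieldType) : lmodType F := (F^o * F^o * F^o * F^o * F^o)%type.

Definition br5 (F : fieldType) (u v : E5 F) : E5 F :=
  (0, 0, u.1.1.1.1 * v.1.1.1.2 - u.1.1.1.2 * v.1.1.1.1,
   u.1.1.1.1 * v.1.1.2 - u.1.1.2 * v.1.1.1.1,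
   u.1.1.1.2 * v.1.1.2 - u.1.1.2 * v.1.1.1.2).

Definition H5 (F : fieldType) : SuperBracket F :=
  {| ev := E5 F; od := 'rV[F]_0; b00 := @br5 F;
     b01 := fun _ _ => 0; b11 := fun _ _ => 0 |}.

Ltac tup := repeat (apply: pair_eq => /=); rewrite /GRing.scale /=; ring.

Lemma H5_lsalg (F : fieldType) : is_lsalg (H5 F).
Proof.
split; first by move=> a [[[[x1 x2] x3] x4] x5] [[[[y1 y2] y3] y4] y5] [[[[z1 z2] z3] z4] z5]; tup.
split; first by move=> a [[[[x1 x2] x3] x4] x5] [[[[y1 y2] y3] y4] y5] [[[[z1 z2] z3] z4] z5]; tup.
split; first by move=> *; rewrite /= scaler0 addr0.
split; first by move=> *; rewrite /= scaler0 addr0.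
split; first by move=> *; rewrite /= scaler0 addr0.
split; first by move=> *; rewrite /= scaler0 addr0.
split; first by move=> [[[[x1 x2] x3] x4] x5] [[[[y1 y2] y3] y4] y5]; tup.
split; first by [].
move=> p q r [[[[x1 x2] x3] x4] x5] ? [[[[y1 y2] y3] y4] y5] ? [[[[z1 z2] z3] z4] z5] ?.
case: p; case: q; case: r => /=; apply: pair_eq => /=; try tup;
  by rewrite !(thinmx0 (_ : 'rV[F]_0)).
Qed.

Definition f5 (F : fieldType) (u : E5 F) : HeisEv F 1 :=
  (const_mx u.1.1.1.1, const_mx u.1.1.1.2, u.1.1.2).

Lemma cmx_lin (F : fieldType) (a : F) (x y : F^o) :
  const_mx (a *: x + y) = a *: (const_mx x : 'rV[F]_1) + const_mx y.
Proof. by apply/matrixP => i j; rewrite !mxE. Qed.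

Lemma cmx0 (F : fieldType) : const_mx (0 : F) = 0 :> 'rV[F]_1.
Proof. by apply/matrixP => i j; rewrite !mxE. Qed.

Lemma cmx_eq0 (F : fieldType) (x : F) : const_mx x = 0 :> 'rV[F]_1 -> x = 0.
Proof. by move/matrixP => /(_ ord0 ord0); rewrite !mxE. Qed.

Lemma capable_H10 (F : fieldType) : capable (Heis F 1 0).
Proof.
exists (H5 F), (@f5 F), id.
split; first exact: H5_lsalg.
split.
  split. move=> a [[[[x1 x2] x3] x4] x5] [[[[y1 y2] y3] y4] y5];
    rewrite /f5 /= !cmx_lin; repeat (apply: pair_eq => //=).
  split; first by [].
  split. move=> [[[[x1 x2] x3] x4] x5] [[[[y1 y2] y3] y4] y5];
    by rewrite /f5 /= /dotv !big_ord1 !mxE !cmx0 [y1 * x2]mulrC.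
  split; first by move=> x y /=; rewrite !(thinmx0 (_ : 'rV[F]_0)).
  by move=> x y; rewrite /f5 /= /dotv big_ord0 !cmx0.
split.
  move=> [[a b] c]; exists (a ord0 ord0, b ord0 ord0, c, 0, 0).
  by rewrite /f5 /=; congr (_, _, _); apply/matrixP => i j; rewrite !mxE !ord1.
split; first by move=> y; exists y.
move=> [[[[[u1 u2] u3] u4] u5] w]; split.
  rewrite /f5 /= => [[]] [] /cmx_eq0 -> /cmx_eq0 -> -> _ [[[[[v1 v2] v3] v4] v5] w'].
  apply: pair_eq => /=; last by rewrite subrr.
  by rewrite addr0; tup.
move=> hc; split; last by rewrite (thinmx0 w).
have e1 := hc (0, 1, 0, 0, 0, 0); have e2 := hc (1, 0, 0, 0, 0, 0).
have a1 := congr1 (fun t => t.1.1.1.2) e1; have a3 := congr1 (fun t => t.1.2) e1.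
have a2 := congr1 (fun t => t.1.1.1.2) e2.
move: a1 a2 a3; rewrite /= !mulr0 !mulr1 !subr0 !sub0r !addr0.
move=> -> /eqP; rewrite oppr_eq0 => /eqP -> /eqP; rewrite oppr_eq0 => /eqP ->.
by rewrite /f5 /= cmx0.
Qed.


Lemma b00_0l (F : fieldType) (H : SuperBracket F) (hH : is_lsalg H) x : b00 H 0 x = 0.
Proof. case: hH => h _; apply: (lin0 (f := b00 H ^~ x)) => a y z; exact: h. Qed.
Lemma b00_0r (F : fieldType) (H : SuperBracket F) (hH : is_lsalg H) x : b00 H x 0 = 0.
Proof. case: hH => _ [h _]; apply: (lin0 (f := b00 H x)) => a y z; exact: h. Qed.
Lemma b01_0l (F : fieldType) (H : SuperBracket F) (hH : is_lsalg H) x : b01 H 0 x = 0.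
Proof. case: hH => _ [_ [h _]]; apply: (lin0 (f := b01 H ^~ x)) => a y z; exact: h. Qed.
Lemma b01_0r (F : fieldType) (H : SuperBracket F) (hH : is_lsalg H) x : b01 H x 0 = 0.
Proof. case: hH => _ [_ [_ [h _]]]; apply: (lin0 (f := b01 H x)) => a y z; exact: h. Qed.
Lemma b11_0l (F : fieldType) (H : SuperBracket F) (hH : is_lsalg H) x : b11 H 0 x = 0.
Proof. case: hH => _ [_ [_ [_ [h _]]]]; apply: (lin0 (f := b11 H ^~ x)) => a y z; exact: h. Qed.
Lemma b11_0r (F : fieldType) (H : SuperBracket F) (hH : is_lsalg H) x : b11 H x 0 = 0.
Proof. case: hH => _ [_ [_ [_ [_ [h _]]]]]; apply: (lin0 (f := b11 H x)) => a y z; exact: h. Qed.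


Ltac getjac hH p q r x0 x1 y0 y1 z0 z1 J :=
  pose proof ((proj2 (proj2 (proj2 (proj2 (proj2 (proj2 (proj2 (proj2 hH)))))))) p q r x0 x1 y0 y1 z0 z1) as J;
  rewrite /pbr /homog /psub /padd /= in J.

Ltac zs hH := rewrite ?(b00_0l hH, b00_0r hH, b01_0l hH, b01_0r hH, b11_0l hH, b11_0r hH,
   oppr0, addr0, add0r, subr0, sub0r).

Definition kerc (F : fieldType) (H L : SuperBracket F) (f0 : ev H -> ev L) (f1 : od H -> od L) :=
  forall u : elt H, (f0 u.1 = 0 /\ f1 u.2 = 0) <-> center u.

Lemma hom0 (F : fieldType) (H L : SuperBracket F) f0 f1 (hf : @is_hom F H L f0 f1) :
  f0 0 = 0 /\ f1 0 = 0.
Proof. case: hf => h0 [h1 _]; split; [exact: (lin0 h0) | exact: (lin0 h1)]. Qed.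

Lemma cent_ev (F : fieldType) (H L : SuperBracket F) f0 f1 (hH : is_lsalg H)
  (hf : @is_hom F H L f0 f1) (hk : kerc f0 f1) u0 :
  f0 u0 = 0 -> (forall x, b00 H u0 x = 0) /\ (forall y, b01 H u0 y = 0).
Proof.
move=> h; have c : center (L:=H) (u0, 0) by apply/hk; split => //; case: (hom0 hf).
split.
  by move=> x; have := congr1 fst (c (x, 0)); rewrite /pbr /=; zs hH.
by move=> y; have := congr1 snd (c (0, y)); rewrite /pbr /=; zs hH.
Qed.

Lemma cent_od (F : fieldType) (H L : SuperBracket F) f0 f1 (hH : is_lsalg H)
  (hf : @is_hom F H L f0 f1) (hk : kerc f0 f1) u1 :
  f1 u1 = 0 -> (forall y, b11 H u1 y = 0) /\ (forall x, b01 H x u1 = 0).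
Proof.
move=> h; have c : center (L:=H) (0, u1) by apply/hk; split => //; case: (hom0 hf).
split.
  by move=> y; have := congr1 fst (c (0, y)); rewrite /pbr /=; zs hH.
move=> x; have := congr1 snd (c (x, 0)); rewrite /pbr /=; zs hH.
by move/eqP; rewrite oppr_eq0 => /eqP.
Qed.

Definition zL (F : fieldType) m : HeisEv F m := (0, 0, 1).

Lemma scalA (F : fieldType) m n (H : SuperBracket F) f0 f1 (hH : is_lsalg H)
  (hf : @is_hom F H (Heis F m n) f0 f1) (hk : kerc f0 f1) (Z : ev H)
  (hZ : f0 Z = zL F m) (u : ev H) (hu : (f0 u).1 = 0) :
  (forall w, b00 H u w = (f0 u).2 *: b00 H Z w) /\
  (forall y, b01 H u y = (f0 u).2 *: b01 H Z y).
Proof.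
have [h0 _] := hf.
have k : f0 ((- (f0 u).2) *: Z + u) = 0.
  rewrite h0 hZ; apply: pair_eq => /=.
    by rewrite hu /= !scaler0 !addr0.
  by rewrite /GRing.scale /= mulr1 addNr.
have [c1 c2] := cent_ev hH hf hk k.
case: hH => l00 [_ [l01 _]].
split.
  move=> w; have := c1 w; rewrite l00 scaleNr => /eqP; rewrite addrC subr_eq0 => /eqP //.
move=> y; have := c2 y; rewrite l01 scaleNr => /eqP; rewrite addrC subr_eq0 => /eqP //.
Qed.

Lemma Znotcent (F : fieldType) m n (H : SuperBracket F) f0 f1 (hH : is_lsalg H)
  (hf : @is_hom F H (Heis F m n) f0 f1) (hk : kerc f0 f1) (Z : ev H)
  (hZ : f0 Z = zL F m) : (forall w, b00 H Z w = 0) -> (forall y, b01 H Z y = 0) -> False.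
Proof.
move=> c1 c2.
have : center (L:=H) (Z, 0).
  by move=> [v0 v1]; rewrite /pbr /= c1 c2; zs hH.
move/hk => [] /=; rewrite hZ => /(congr1 snd) /= /eqP; by rewrite oner_eq0.
Qed.

Lemma dot_delta (F : fieldType) k (i j : 'I_k) :
  dotv (delta_mx 0 i : 'rV[F]_k) (delta_mx 0 j) = (i == j)%:R.
Proof.
rewrite /dotv (bigD1 i) //= big1 => [|l /negbTE li]; last by rewrite !mxE li mul0r.
by rewrite !mxE !eqxx mul1r addr0.
Qed.

Lemma dot0l (F : fieldType) k (v : 'rV[F]_k) : dotv 0 v = 0.
Proof. by rewrite /dotv big1 // => i _; rewrite mxE mul0r. Qed.
Lemma dot0r (F : fieldType) k (v : 'rV[F]_k) : dotv v 0 = 0.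
Proof. by rewrite /dotv big1 // => i _; rewrite mxE mulr0. Qed.

Lemma f00 (F : fieldType) m n (H : SuperBracket F) f0 f1
  (hf : @is_hom F H (Heis F m n) f0 f1) a b : (f0 (b00 H a b)).1 = 0.
Proof. by case: hf => _ [_ [-> _]]. Qed.
Lemma f11 (F : fieldType) m n (H : SuperBracket F) f0 f1
  (hf : @is_hom F H (Heis F m n) f0 f1) a b : (f0 (b11 H a b)).1 = 0.
Proof. by case: hf => _ [_ [_ [_ ->]]]. Qed.

Lemma notcap_odd (F : fieldType) (hF3 : (3%:R : F) != 0) m n (H : SuperBracket F) f0 f1
  (hH : is_lsalg H) (hf : @is_hom F H (Heis F m n.+1) f0 f1)
  (s1 : forall y, exists x, f1 x = y) (hk : kerc f0 f1) : False.
Proof.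
have [Y hY] := s1 (delta_mx 0 ord0).
set Z := b11 H Y Y.
have hZ : f0 Z = zL F m.
  by case: hf => _ [_ [_ [_ ->]]]; rewrite hY /= dot_delta eqxx.
have c1 : forall w, b00 H Z w = 0.
  move=> w; getjac hH true true false (0 : ev H) Y (0 : ev H) Y w (0 : od H) J.
  move/(congr1 fst): J => /=; zs hH.
  have fc : f1 (b01 H w Y) = 0 by case: hf => _ [_ [_ [-> _]]].
  have [cc1 _] := cent_od hH hf hk fc.
  have e : b11 H Y (- b01 H w Y) = 0.
    case: hH => _ [_ [_ [_ [_ [r11 [_ [s11 _]]]]]]].
    rewrite (linN (f := b11 H Y)); last by move=> *; exact: r11.
    by rewrite s11 cc1 oppr0.
  by rewrite e subr0.
have c2Y : b01 H Z Y = 0.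
  getjac hH true true true (0 : ev H) Y (0 : ev H) Y (0 : ev H) Y J.
  move/(congr1 snd): J => /=; zs hH; rewrite opprK -/Z => e.
  have : (3%:R : F) *: b01 H Z Y = 0.
    by rewrite scaler_nat !mulrS mulr0n addr0 -e subrr.
  by move/eqP; rewrite scaler_eq0 (negbTE hF3) /= => /eqP.
have c2 : forall y, b01 H Z y = 0.
  move=> y; getjac hH true true true (0 : ev H) Y (0 : ev H) Y (0 : ev H) y J.
  move/(congr1 snd): J => /=; zs hH; rewrite opprK -/Z.
  have [_ A2] := scalA hH hf hk hZ (f11 hf Y y).
  rewrite A2 c2Y scaler0 oppr0 addr0 => /esym //.
exact: (Znotcent hH hf hk hZ c1 c2).
Qed.

Lemma b00_into (F : fieldType) m n (H : SuperBracket F) f0 f1 (hH : is_lsalg H)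
  (hf : @is_hom F H (Heis F m n) f0 f1) (hk : kerc f0 f1) (Z : ev H)
  (hZ : f0 Z = zL F m) a : b00 H a Z = 0 -> forall s t, b00 H a (b00 H s t) = 0.
Proof.
move=> h s t; have [A1 _] := scalA hH hf hk hZ (f00 hf s t).
have [_ [_ [_ [_ [_ [_ [sk _]]]]]]] := hH.
by rewrite sk A1 (sk Z a) h oppr0 scaler0 oppr0.
Qed.

Lemma notcap_ev (F : fieldType) m n (H : SuperBracket F) f0 f1
  (hH : is_lsalg H) (hf : @is_hom F H (Heis F m.+2 n) f0 f1)
  (s0 : forall y, exists x, f0 x = y) (hk : kerc f0 f1) : False.
Proof.
pose e0 : 'rV[F]_m.+2 := delta_mx 0 0.
pose e1 : 'rV[F]_m.+2 := delta_mx 0 1.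
have [X1 h1] := s0 (e0, 0, 0).
have [P1 h2] := s0 (0, e0, 0).
have [X2 h3] := s0 (e1, 0, 0).
have [P2 h4] := s0 (0, e1, 0).
have [_ [_ [hb _]]] := hf.
have [_ [_ [_ [_ [_ [_ [sk _]]]]]]] := hH.
set Z := b00 H X1 P1.
have hZ : f0 Z = zL F m.+2.
  by rewrite hb h1 h2 /= ?dot0l ?dot0r /e0 dot_delta eqxx subr0.
have hZ2 : f0 (b00 H X2 P2) = zL F m.+2.
  by rewrite hb h3 h4 /= ?dot0l ?dot0r /e1 dot_delta eqxx subr0.
have ZZ2 : forall w, b00 H (b00 H X2 P2) w = b00 H Z w.
  by move=> w; have [A1 _] := scalA hH hf hk hZ (f00 hf X2 P2); rewrite A1 hZ2 scale1r.
have d01 : dotv e0 e1 = 0 by rewrite dot_delta.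
have d10 : dotv e1 e0 = 0 by rewrite dot_delta.
have cX : b00 H X1 Z = 0.
  rewrite sk -ZZ2 -sk.
  getjac hH false false false X1 (0 : od H) X2 (0 : od H) P2 (0 : od H) J.
  move/(congr1 fst): J => /=; zs hH => ->.
  have k1 : f0 (b00 H X1 X2) = 0.
    by rewrite hb h1 h3; apply: pair_eq => //=; rewrite !dot0r subr0.
  have k2 : f0 (b00 H X1 P2) = 0.
    by rewrite hb h1 h4; apply: pair_eq => //=; rewrite d01 dot0l subr0.
  have [c1 _] := cent_ev hH hf hk k1; have [c2 _] := cent_ev hH hf hk k2.
  by rewrite c1 sk c2 oppr0 addr0.
have cP : b00 H P1 Z = 0.
  rewrite sk -ZZ2 -sk.
  getjac hH false false false P1 (0 : od H) X2 (0 : od H) P2 (0 : od H) J.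
  move/(congr1 fst): J => /=; zs hH => ->.
  have k1 : f0 (b00 H P1 X2) = 0.
    by rewrite hb h2 h3; apply: pair_eq => //=; rewrite d10 dot0l subrr.
  have k2 : f0 (b00 H P1 P2) = 0.
    by rewrite hb h2 h4; apply: pair_eq => //=; rewrite !dot0l subrr.
  have [c1 _] := cent_ev hH hf hk k1; have [c2 _] := cent_ev hH hf hk k2.
  by rewrite c1 sk c2 oppr0 addr0.
have c1 : forall w, b00 H Z w = 0.
  move=> w.
  getjac hH false false false X1 (0 : od H) P1 (0 : od H) w (0 : od H) J.
  move/(congr1 fst): J => /=; zs hH.
  rewrite (b00_into hH hf hk hZ cX) (b00_into hH hf hk hZ cP) addr0 -/Z.
  by move/esym.
have c2 : forall y, b01 H Z y = 0.
  move=> y.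
  getjac hH false false true X1 (0 : od H) P1 (0 : od H) (0 : ev H) y J.
  move/(congr1 snd): J => /=; zs hH.
  have fa : f1 (b01 H P1 y) = 0 by case: hf => _ [_ [_ [-> _]]].
  have fb : f1 (b01 H X1 y) = 0 by case: hf => _ [_ [_ [-> _]]].
  have [_ ca] := cent_od hH hf hk fa; have [_ cb] := cent_od hH hf hk fb.
  by rewrite ca cb addr0 -/Z => /esym.
exact: (Znotcent hH hf hk hZ c1 c2).
Qed.

Theorem mainTheorem3 (F : fieldType) (hF2 : (2%:R : F) != 0) (hF3 : (3%:R : F) != 0)
  (m n : nat) (hmn : (1 <= m + n)%N) :
  capable (Heis F m n) <-> (m = 1%N /\ n = 0%N).
Proof.
split; last by case=> -> ->; exact: capable_H10.
case: n hmn => [|n] hmn [H [f0 [f1 [hH [hf [s0 [s1 hk]]]]]]].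
  case: m hmn f0 f1 hf s0 s1 hk => [|[|m]] hmn f0 f1 hf s0 s1 hk //.
  by case: (notcap_ev hH hf s0 hk).
by case: (notcap_odd hF3 hH hf s1 hk).
Qed.
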